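(* Let $S\le T_n$ be a transformation monoid and let $G\le S_n$ be a group normalizing $S$ (i.e. $g^{-1}Sg=S$ for all $g\in G$) such that $g^2=1$ for all $g\in G$. If $SG$ is intra-regular, then $S$ is intra-regular.
   Context: A transformation monoid is a subsemigroup of $T_n$ containing the identity map. $SG=\{sg:s\in S,g\in G\}$, a semigroup. A monoid $U$ is intra-regular if for every $a\in U$ there exist $b,c\in U$ with $ba^2c=a$. *)

(* Defs.v *)
From mathcomp Require Import all_boot all_fingroup.
Set Implicit Arguments. Unset Strict Implicit. Unset Printing Implicit Defensive.

Definition trans (n : nat) := {ffun 'I_n -> 'I_n}.

(* Product in T_n, maps acting on the right: x (f g) = (x f) g. *)
Definition tmul n (f g : trans n) : trans n := [ffun x => g (f x)].

Definition tid n : trans n := [ffun x => x].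

Definition perm_trans n (g : {perm 'I_n}) : trans n := [ffun x => g x].

Definition is_trans_monoid n (S : {set trans n}) : Prop :=
  tid n \in S /\ forall f g, f \in S -> g \in S -> tmul f g \in S.

Definition normalizes n (G : {group {perm 'I_n}}) (S : {set trans n}) : Prop :=
  forall g, g \in G ->
    [set tmul (tmul (perm_trans g^-1) s) (perm_trans g) | s in S] = S.

Definition setSG n (S : {set trans n}) (G : {group {perm 'I_n}}) : {set trans n} :=
  [set tmul s (perm_trans g) | s in S, g in G].

Definition intra_regular n (U : {set trans n}) : Prop :=
  forall a, a \in U -> exists b c, [/\ b \in U, c \in U &
    tmul (tmul (tmul b a) a) c = a].

(* Main.v *)
Require Import Defs.
From mathcomp Require Import all_boot all_fingroup.

Lemma pw_in n (S : {set trans n}) (a : trans n) :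
  is_trans_monoid S -> a \in S -> forall k, [ffun x => iter k a x] \in S.
Proof.
move=> [HS1 HSm] Ha; elim=> [|k IH].
  have -> : [ffun x => iter 0 a x] = tid n by apply/ffunP=> x; rewrite !ffunE.
  exact: HS1.
have -> : [ffun x => iter k.+1 a x] = tmul [ffun x => iter k a x] a.
  by apply/ffunP=> x; rewrite !ffunE.
exact: HSm.
Qed.

Lemma key (n : nat) (a b c : trans n) :
  tmul (tmul (tmul b a) a) c = a -> exists d, forall x, a x = iter d.+2 a x.
Proof.
move=> E.
set Y := [set a x | x in [set: 'I_n]].
have sub : a @: Y \subset Y.
  by apply/subsetP=> y /imsetP [z _ ->]; apply/imsetP; exists z.
have sub2 : Y \subset c @: (a @: Y).
  apply/subsetP=> y /imsetP [z _ ->].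
  have -> : a z = tmul (tmul (tmul b a) a) c z by rewrite E.
  rewrite !ffunE; apply/imsetP; exists (a (a (b z))); last by [].
  apply/imsetP; exists (a (b z)); last by [].
  by apply/imsetP; exists (b z).
have cardY : #|a @: Y| == #|Y|.
  rewrite eqn_leq leq_imset_card /=.
  apply: (leq_trans (subset_leq_card sub2)); exact: leq_imset_card.
have inj : {in Y &, injective a} by apply/imset_injP.
have stab : forall y, y \in Y -> a y \in Y.
  by move=> y Hy; apply: (subsetP sub); apply/imsetP; exists y.
have stabk : forall k y, y \in Y -> iter k a y \in Y.
  by elim=> [|k IH] y Hy //=; apply: stab; apply: IH.
have injk : forall k, {in Y &, injective (iter k a)}.
  elim=> [|k IH] y z Hy Hz //= H.
  by apply: IH => //; apply: inj => //; apply: stabk.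
pose f (k : 'I_(#|{: trans n}|.+1)) : trans n := [ffun x => iter k.+1 a x].
have : ~~ injectiveb f.
  apply/negP => /injectiveP Hf.
  have := leq_card f Hf; rewrite card_ord; by rewrite ltnn.
move=> /injectivePn [i [j Hij Hf]].
wlog lt : i j Hij Hf / (i < j)%N.
  move=> W; case: (ltngtP i j) => H.
  - exact: (W i j).
  - by apply: (W j i) => //; rewrite eq_sym.
  - by move: Hij; rewrite -val_eqE /= H eqxx.
have [d Hd] : exists d, j = (i + d.+1)%N :> nat.
  by exists (j - i.+1)%N; rewrite addnS -addSn subnKC.
exists d => x.
have := congr1 (fun h : trans n => h x) Hf; rewrite /f !ffunE Hd.
move=> H.
have Hax : a x \in Y by apply/imsetP; exists x.
have H2 : iter i a (a x) = iter i a (iter d.+1 a (a x)).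
  by rewrite -iterSr H iterSr iterD.
apply: (injk i) => //; first by rewrite iterSr; apply: stabk.
by rewrite H2 -iterSr.
Qed.

Theorem proposition4p7 (n : nat) (S : {set trans n}) (G : {group {perm 'I_n}}) :
  is_trans_monoid S ->
  normalizes G S ->
  (forall g, g \in G -> (g * g = 1)%g) ->
  intra_regular (setSG S G) ->
  intra_regular S.
Proof.
move=> HS _ _ HSG a Ha.
have HaSG : a \in setSG S G.
  apply/imset2P; exists a 1%g => //.
  by apply/ffunP=> x; rewrite !ffunE perm1.
have [b [c [_ _ E]]] := HSG a HaSG.
have [d Hd] := @key n a b c E.
exists (tid n), [ffun x => iter d a x]; split.
- by case: HS.
- exact: pw_in.
apply/ffunP=> x; rewrite !ffunE [in RHS]Hd !iterSr.
done.
Qed.
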